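(* Let $A=\mathrm{diag}(\mathbf{a})$ with $\mathbf{a}\in\mathbb{R}^n$, $\beta>0$, $f(\mathbf{z})=\frac12\mathbf{z}^*A\mathbf{z}+\frac{\beta}{2}\sum_k|z_k|^4$, let $W\in\mathbb{C}^{n\times n}$ be Hermitian and $\sigma>0$, and set $f_\sigma(\mathbf{z})=f(\mathbf{z})+\frac{\sigma}{2}\mathbf{z}^*W\mathbf{z}$. Suppose $\mathbf{z}_0$ is a global minimizer of $f$ on $\mathbb{CS}^{n-1}$ and $\mathbf{y}\in\mathbb{CS}^{n-1}$ satisfies $f_\sigma(\mathbf{y})\le\min_{\mathbf{z}\in\llbracket\mathbf{z}_0\rrbracket}f_\sigma(\mathbf{z})$. Then $\min_{\mathbf{z}\in\llbracket\mathbf{z}_0\rrbracket}\|\mathbf{y}-\mathbf{z}\|_4\le\sqrt[3]{2\sigma\beta^{-1}\|W\|_2\,n^{1/4}}$.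
   Context: $\mathbb{CS}^{n-1}$ is the unit sphere of $\mathbb{C}^n$; $\llbracket\mathbf{z}_0\rrbracket=\{\mathbf{y}\in\mathbb{C}^n:|y_k|=|(z_0)_k|\ \forall k\}$; $\|W\|_2$ is the spectral norm. *)

(* Defs.v *)
From HB Require Import structures.
From mathcomp Require Import all_boot all_order all_algebra.
From mathcomp Require Import complex.
From mathcomp Require Import all_classical all_reals.
From mathcomp Require Import exp.

Set Implicit Arguments.
Unset Strict Implicit.
Unset Printing Implicit Defensive.
Import Order.TTheory GRing.Theory Num.Theory.
Local Open Scope ring_scope.
Local Open Scope complex_scope.

Definition cmod (R : rcfType) (z : R[i]) : R := Normc.normc z.

(* Hermitian form z^* W z (real part; it is real when W is Hermitian) *)
Definition qform (R : rcfType) (n : nat) (W : 'M[R[i]]_n) (z : 'cV[R[i]]_n) : R :=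
  complex.Re (\sum_(i < n) \sum_(j < n) (z i ord0)^* * W i j * z j ord0).

Definition is_hermitian (R : rcfType) (n : nat) (W : 'M[R[i]]_n) : Prop :=
  forall i j, W j i = (W i j)^*.

Definition norm2 (R : rcfType) (n : nat) (z : 'cV[R[i]]_n) : R :=
  Num.sqrt (\sum_(k < n) cmod (z k ord0) ^+ 2).

Definition norm4 (R : realType) (n : nat) (z : 'cV[R[i]]_n) : R :=
  (\sum_(k < n) cmod (z k ord0) ^+ 4) `^ (4%:R^-1).

Definition csphere (R : rcfType) (n : nat) : set 'cV[R[i]]_n :=
  [set z | norm2 z = 1].

(* [[z0]] : vectors with the same entrywise moduli as z0 *)
Definition same_mod (R : rcfType) (n : nat) (z0 : 'cV[R[i]]_n) : set 'cV[R[i]]_n :=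
  [set y | forall k, cmod (y k ord0) = cmod (z0 k ord0)].

Definition spec_norm (R : realType) (n : nat) (W : 'M[R[i]]_n) : R :=
  sup [set norm2 (W *m x) | x in @csphere R n].

Definition fobj (R : rcfType) (n : nat) (a : 'rV[R]_n) (beta : R) (z : 'cV[R[i]]_n) : R :=
  2^-1 * qform (diag_mx (map_mx (real_complex R) a)) z
  + beta / 2 * \sum_(k < n) cmod (z k ord0) ^+ 4.

Definition fsigma (R : rcfType) (n : nat) (a : 'rV[R]_n) (beta : R)
  (sigma : R) (W : 'M[R[i]]_n) (z : 'cV[R[i]]_n) : R :=
  fobj a beta z + sigma / 2 * qform W z.

(* Main.v *)
Require Import Defs.
From HB Require Import structures.
From mathcomp Require Import all_boot all_order all_algebra.
From mathcomp Require Import complex.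
From mathcomp Require Import all_classical all_reals.
From mathcomp Require Import exp.
From mathcomp Require Import ring lra.
Import Order.TTheory GRing.Theory Num.Theory.
Local Open Scope ring_scope.
Local Open Scope classical_set_scope.


Section S.
Context {R : realType}.

Lemma cmodE (x y : R) : cmod (x +i* y)%C = Num.sqrt (x ^+ 2 + y ^+ 2).
Proof. by []. Qed.

Lemma cmod_ge0 (z : R[i]) : 0 <= cmod z.
Proof. by case: z => x y; rewrite cmodE sqrtr_ge0. Qed.

Lemma cmodR (r : R) : cmod r%:C%C = `|r|.
Proof. by rewrite /cmod /= expr0n /= addr0 sqrtr_sqr. Qed.

Lemma cmodM (x y : R[i]) : cmod (x * y) = cmod x * cmod y.
Proof. exact: Normc.normcM. Qed.

Lemma cmodD (x y : R[i]) : cmod (x + y) <= cmod x + cmod y.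
Proof. exact: le_normcD. Qed.

Lemma cmodN (x : R[i]) : cmod (- x) = cmod x.
Proof. exact: normcN. Qed.

Lemma cmodJ (x : R[i]) : cmod (x^*%C) = cmod x.
Proof. by case: x => a b; rewrite /= sqrrN. Qed.

Lemma cmod_eq0 (x : R[i]) : (cmod x == 0) = (x == 0).
Proof. apply/eqP/eqP; first exact: Normc.eq0_normc. by move=> ->; exact: Normc.normc0. Qed.

Lemma Re_le_cmod (x : R[i]) : `|complex.Re x| <= cmod x.
Proof.
case: x => a b /=. rewrite -sqrtr_sqr. apply: ler_wsqrtr. rewrite lerDl sqr_ge0 //.
Qed.

Lemma mulJc (z : R[i]) : z^*%C * z = (cmod z ^+ 2)%:C%C.
Proof.
case: z => a b. rewrite /= sqr_sqrtr ?addr_ge0 ?sqr_ge0 //.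
apply/eqP; rewrite eq_complex /=; apply/andP; split; apply/eqP; ring.
Qed.

Lemma cmod_sum n (f : 'I_n -> R[i]) : cmod (\sum_i f i) <= \sum_i cmod (f i).
Proof.
elim/big_ind2: _ => //; first by rewrite /cmod Normc.normc0.
by move=> x1 x2 y1 y2 h1 h2; apply: le_trans (cmodD _ _) (lerD h1 h2).
Qed.

Lemma CS_sq n (u v : 'I_n -> R) :
  (\sum_i u i * v i) ^+ 2 <= (\sum_i u i ^+ 2) * (\sum_i v i ^+ 2).
Proof.
set A := \sum_i u i ^+ 2; set B := \sum_i v i ^+ 2; set S := \sum_i u i * v i.
have B0 : 0 <= B by apply: sumr_ge0 => i _; apply: sqr_ge0.
case: (eqVneq B 0) => [Be|Bne].
  have v0 : forall i, v i = 0.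
    move=> i; apply/eqP; rewrite -sqrf_eq0; apply/eqP.
    move/eqP: Be; rewrite psumr_eq0 => [/allP/(_ i (mem_index_enum _)) /eqP//|j _].
    exact: sqr_ge0.
  have -> : S = 0 by rewrite /S big1 // => i _; rewrite v0 mulr0.
  by rewrite expr0n /= mulr_ge0 // sumr_ge0 // => i _; apply: sqr_ge0.
have Bp : 0 < B by rewrite lt_def Bne B0.
have H : 0 <= \sum_i (u i * B - v i * S) ^+ 2 by apply: sumr_ge0 => i _; apply: sqr_ge0.
have E : \sum_i (u i * B - v i * S) ^+ 2 = B * (A * B - S ^+ 2).
  rewrite (eq_bigr (fun i => B ^+ 2 * u i ^+ 2 - (2 * B * S) * (u i * v i) + S ^+ 2 * v i ^+ 2)); last by move=> i _; ring.
  rewrite big_split /= sumrB -!mulr_sumr -/A -/B -/S; ring.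
rewrite E in H. rewrite -subr_ge0. by rewrite pmulr_rge0 in H.
Qed.

Lemma CS n (u v : 'I_n -> R) :
  \sum_i u i * v i <= Num.sqrt (\sum_i u i ^+ 2) * Num.sqrt (\sum_i v i ^+ 2).
Proof.
rewrite -sqrtrM; last by apply: sumr_ge0 => i _; apply: sqr_ge0.
apply: (le_trans (ler_norm _)); rewrite -sqrtr_sqr. apply: ler_wsqrtr. exact: CS_sq.
Qed.

Lemma CSc n (a b : 'I_n -> R[i]) :
  cmod (\sum_i a i * b i) <= Num.sqrt (\sum_i cmod (a i) ^+ 2) * Num.sqrt (\sum_i cmod (b i) ^+ 2).
Proof.
apply: (le_trans (cmod_sum _ _)).
under eq_bigr do rewrite cmodM.
exact: CS.
Qed.

Lemma ReD (x y : R[i]) : complex.Re (x + y) = complex.Re x + complex.Re y.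
Proof. by case: x; case: y. Qed.

Lemma Re_sum n (f : 'I_n -> R[i]) : complex.Re (\sum_i f i) = \sum_i complex.Re (f i).
Proof. by rewrite (big_morph _ ReD (erefl (complex.Re (0:R[i])))). Qed.

Lemma sum_ge0_sq n (f : 'I_n -> R[i]) : 0 <= \sum_k cmod (f k) ^+ 2.
Proof. by apply: sumr_ge0 => k _; apply: sqr_ge0. Qed.

Lemma sphereP n (z : 'cV[R[i]]_n) : z \in @csphere R n = (\sum_k cmod (z k ord0) ^+ 2 == 1).
Proof.
apply/idP/idP.
  rewrite in_setE /csphere /norm2 /= => H; apply/eqP.
  by rewrite -(sqr_sqrtr (sum_ge0_sq _ _)) H expr1n.
move/eqP=> H; rewrite in_setE /csphere /norm2 /=.
by rewrite H sqrtr1.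
Qed.

Lemma fobjE n (a : 'rV[R]_n) beta z : fobj a beta z =
  2^-1 * \sum_k a ord0 k * cmod (z k ord0) ^+ 2 + beta / 2 * \sum_k (cmod (z k ord0) ^+ 2) ^+ 2.
Proof.
rewrite /fobj /qform Re_sum; congr (_ * _ + _ * _); last first.
  by apply: eq_bigr => k _; rewrite -exprM.
apply: eq_bigr => i _.
rewrite (bigD1 i) //= big1 => [|j ji]; last by rewrite !mxE eq_sym (negbTE ji) mulr0n mulr0 mul0r.
rewrite addr0 !mxE eqxx mulr1n mulrAC mulJc -rmorphM /= mulrC; congr (_ * _); congr (a _ i); apply: val_inj; by case: ord0.
Qed.

Definition mkv n (v : 'I_n -> R) : 'cV[R[i]]_n := \col_k (Num.sqrt (v k))%:C%C.
Arguments mkv {n}.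

Lemma mkvE n (v : 'I_n -> R) k : 0 <= v k -> cmod (mkv v k ord0) ^+ 2 = v k.
Proof. by move=> h; rewrite /mkv mxE cmodR ger0_norm ?sqrtr_ge0 // sqr_sqrtr. Qed.

Definition gf n (a : 'rV[R]_n) beta (v : 'I_n -> R) :=
  \sum_k (2^-1 * a ord0 k * v k + beta / 2 * v k ^+ 2).
Arguments gf {n}.

Lemma fobj_gf n (a : 'rV[R]_n) beta z :
  fobj a beta z = gf a beta (fun k => cmod (z k ord0) ^+ 2).
Proof. by rewrite fobjE /gf big_split /= !mulr_sumr; congr (_ + _); apply: eq_bigr => k _; rewrite mulrA. Qed.

Lemma opt_ineq n (a : 'rV[R]_n) beta (z0 y : 'cV[R[i]]_n) :
  0 < beta -> z0 \in @csphere R n ->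
  (forall z, z \in @csphere R n -> fobj a beta z0 <= fobj a beta z) ->
  y \in @csphere R n ->
  beta / 2 * \sum_k (cmod (y k ord0) ^+ 2 - cmod (z0 k ord0) ^+ 2) ^+ 2
    <= fobj a beta y - fobj a beta z0.
Proof.
move=> bp z0s zmin ys.
set p := fun k => cmod (y k ord0) ^+ 2.
set q := fun k => cmod (z0 k ord0) ^+ 2.
have p0 : forall k, 0 <= p k by move=> k; apply: sqr_ge0.
have q0 : forall k, 0 <= q k by move=> k; apply: sqr_ge0.
have ps : \sum_k p k = 1 by apply/eqP; rewrite -sphereP.
have qs : \sum_k q k = 1 by apply/eqP; rewrite -sphereP.
set L := \sum_k (2^-1 * a ord0 k + beta * q k) * (p k - q k).
set C := beta / 2 * \sum_k (p k - q k) ^+ 2.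
have C0 : 0 <= C.
  apply: mulr_ge0; [by rewrite divr_ge0 // ltW | by apply: sumr_ge0 => k _; apply: sqr_ge0].
have iden : forall t, gf a beta (fun k => q k + t * (p k - q k)) - gf a beta q = t * L + t ^+ 2 * C.
  move=> t; have -> : t * L + t ^+ 2 * C = \sum_k (t * ((2^-1 * a ord0 k + beta * q k) * (p k - q k))
      + t ^+ 2 * (beta / 2 * (p k - q k) ^+ 2)).
    by rewrite big_split /= -!mulr_sumr /C mulr_sumr.
  rewrite /gf -sumrB.
  by apply: eq_bigr => k _ /=; field.
have key : forall t, 0 <= t <= 1 -> 0 <= t * L + t ^+ 2 * C.
  move=> t /andP[t0 t1]; rewrite -iden subr_ge0.
  have vt0 : forall k, 0 <= q k + t * (p k - q k).
    move=> k; have -> : q k + t * (p k - q k) = (1 - t) * q k + t * p k by ring.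
    by rewrite addr_ge0 // mulr_ge0 // subr_ge0.
  have E : (fun k => cmod (mkv (fun k => q k + t * (p k - q k)) k ord0) ^+ 2) =
     (fun k => q k + t * (p k - q k)) by apply/funext => k; apply: mkvE.
  have := zmin (mkv (fun k => q k + t * (p k - q k))).
  rewrite !fobj_gf E; apply.
  rewrite sphereP; apply/eqP.
  rewrite (eq_bigr _ (fun k _ => @mkvE _ _ k (vt0 k))) big_split /= -mulr_sumr sumrB ps qs subrr mulr0 addr0.
  by [].
have L0 : 0 <= L.
  rewrite leNgt; apply/negP => Lneg.
  pose t := Num.min 1 (- L / (C + 1)).
  have C1 : 0 < C + 1 by rewrite ltr_wpDl.
  have tp : 0 < t by rewrite lt_min ltr01 divr_gt0 // oppr_gt0.
  have t1 : t <= 1 by rewrite ge_min lexx.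
  have tle : t * (C + 1) <= - L by rewrite -ler_pdivlMr // ge_min lexx orbT.
  have := key t; rewrite (ltW tp) t1 => /(_ isT).
  rewrite expr2 -mulrA -mulrDr pmulr_rge0 //.
  apply/negP; rewrite -ltNge.
  have : t * C < t * (C + 1) by rewrite ltr_pM2l // ltrDl.
  move=> _; rewrite mulrDr mulr1 in tle; lra.
have := iden 1. rewrite mul1r expr1n mul1r.
have -> : (fun k => q k + 1 * (p k - q k)) = p by apply/funext => k; rewrite mul1r addrC subrK.
rewrite !fobj_gf -/p -/q => ->. rewrite -/C. lra.
Qed.

Definition bil n (W : 'M[R[i]]_n) (u v : 'cV[R[i]]_n) : R :=
  complex.Re (\sum_(i < n) \sum_(j < n) (u i ord0)^*%C * W i j * v j ord0).
Arguments bil {n}.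

Lemma ReB (x y : R[i]) : complex.Re (x - y) = complex.Re x - complex.Re y.
Proof. by case: x; case: y. Qed.

Lemma Re_abs (x : R[i]) : complex.Re x <= cmod x.
Proof. exact: le_trans (ler_norm _) (Re_le_cmod x). Qed.

Lemma NRe_abs (x : R[i]) : - complex.Re x <= cmod x.
Proof. have := Re_le_cmod x; rewrite -normrN => h; exact: le_trans (ler_norm _) h. Qed.

Lemma bil_diff n (W : 'M[R[i]]_n) y z :
  bil W y y - bil W z z = bil W (y - z) y + bil W z (y - z).
Proof.
rewrite /bil -ReB -ReD; congr complex.Re.
rewrite -sumrB -big_split; apply: eq_bigr => i _ /=.
rewrite -sumrB -big_split; apply: eq_bigr => j _ /=.
rewrite !mxE rmorphB /=. ring.
Qed.

Lemma bil_bound n (W : 'M[R[i]]_n) u v :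
  `|bil W u v| <= norm2 u * norm2 (W *m v).
Proof.
have -> : bil W u v = complex.Re (\sum_i (u i ord0)^*%C * (W *m v) i ord0).
  rewrite /bil; congr complex.Re; apply: eq_bigr => i _.
  rewrite mxE mulr_sumr; apply: eq_bigr => j _; by rewrite mulrA.
apply: le_trans (Re_le_cmod _) _.
apply: le_trans (CSc _ _ _) _.
by under eq_bigr do rewrite cmodJ.
Qed.

Lemma norm2_ge0 n (v : 'cV[R[i]]_n) : 0 <= norm2 v.
Proof. exact: sqrtr_ge0. Qed.

Lemma row_bound n (W : 'M[R[i]]_n) v i :
  cmod ((W *m v) i ord0) <= Num.sqrt (\sum_j cmod (W i j) ^+ 2) * norm2 v.
Proof. rewrite mxE. exact: CSc. Qed.

Definition Mw n (W : 'M[R[i]]_n) := Num.sqrt (\sum_i (Num.sqrt (\sum_j cmod (W i j) ^+ 2)) ^+ 2).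
Arguments Mw {n}.

Lemma Mw_bound n (W : 'M[R[i]]_n) v : norm2 (W *m v) <= Mw W * norm2 v.
Proof.
rewrite /Mw -(ger0_norm (norm2_ge0 _ v)) -sqrtr_sqr -sqrtrM; last first.
  by apply: sumr_ge0 => i _; apply: sqr_ge0.
apply: ler_wsqrtr; rewrite mulr_suml; apply: ler_sum => i _.
rewrite -exprMn; rewrite !expr2; apply: ler_pM; try apply: cmod_ge0.
  by apply: row_bound.
by apply: row_bound.
Qed.

Lemma norm2Z n (c : R[i]) (v : 'cV[R[i]]_n) : norm2 (c *: v) = cmod c * norm2 v.
Proof.
rewrite /norm2 -(ger0_norm (cmod_ge0 c)) -sqrtr_sqr -sqrtrM ?sqr_ge0 //.
congr Num.sqrt; rewrite mulr_sumr; apply: eq_bigr => k _.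
by rewrite mxE cmodM exprMn.
Qed.

Lemma spec_bound n (W : 'M[R[i]]_n) v : norm2 (W *m v) <= spec_norm W * norm2 v.
Proof.
have ub : has_ubound [set norm2 (W *m x) | x in @csphere R n].
  exists (Mw W) => r [x xs <-]. have := Mw_bound _ W x. by rewrite xs mulr1.
have [N0|Np] := eqVneq (norm2 v) 0.
  have := Mw_bound _ W v. rewrite N0 !mulr0 => h. by apply: le_trans h _.
have Ngt : 0 < norm2 v by rewrite lt_def Np norm2_ge0.
pose x := ((norm2 v)^-1)%:C%C *: v.
have xs : norm2 x = 1 by rewrite /x norm2Z cmodR ger0_norm ?invr_ge0 ?norm2_ge0 // mulVf.
have : norm2 (W *m x) <= spec_norm W.
  apply: (ub_le_sup ub); exists x => //.
rewrite /x -scalemxAr norm2Z cmodR ger0_norm ?invr_ge0 ?norm2_ge0 //.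
by rewrite ler_pdivrMl // mulrC.
Qed.

Lemma pow_root (x : R) (k : nat) : 0 <= x -> (0 < k)%N -> (x `^ (k%:R^-1)) ^+ k = x.
Proof.
move=> x0 k0; rewrite -powR_mulrn ?powR_ge0 // -powRrM mulVf ?powRr1 //.
by rewrite pnatr_eq0 -lt0n.
Qed.

Lemma pow_root' (x : R) (k : nat) : 0 <= x -> (0 < k)%N -> (x ^+ k) `^ (k%:R^-1) = x.
Proof.
move=> x0 k0; rewrite -powR_mulrn // -powRrM mulfV ?powRr1 //.
by rewrite pnatr_eq0 -lt0n.
Qed.

Lemma norm2_le4 n (d : 'cV[R[i]]_n) : norm2 d <= n%:R `^ (4%:R^-1) * norm4 d.
Proof.
set N := n%:R `^ (4%:R^-1); set M := norm4 d.
have N0 : 0 <= N by apply: powR_ge0.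
have M0 : 0 <= M by apply: powR_ge0.
have N4 : N ^+ 4 = n%:R by apply: pow_root.
have S0 : 0 <= \sum_k cmod (d k ord0) ^+ 4 by apply: sumr_ge0 => k _; rewrite exprn_ge0 // cmod_ge0.
have M4 : M ^+ 4 = \sum_k cmod (d k ord0) ^+ 4 by apply: pow_root.
rewrite /norm2 -(ger0_norm (mulr_ge0 N0 M0)) -sqrtr_sqr.
apply: ler_wsqrtr.
have := CS _ (fun _ : 'I_n => 1) (fun k => cmod (d k ord0) ^+ 2).
under eq_bigr do rewrite mul1r.
under [X in _ <= Num.sqrt X * _ -> _]eq_bigr do rewrite expr1n.
under [X in _ <= _ * Num.sqrt X -> _]eq_bigr do rewrite -exprM.
move=> h; apply: le_trans h _.
have e4 : forall x : R, x ^+ 4 = (x ^+ 2) ^+ 2 by move=> x; rewrite -exprM.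
rewrite sumr_const card_ord -N4 -M4 !e4 !sqrtr_sqr !ger0_norm ?exprn_ge0 //.
by rewrite exprMn.
Qed.

End S.
Arguments bil {R n}.

Theorem theorem7 (R : realType) (n : nat) (a : 'rV[R]_n) (beta sigma : R)
  (W : 'M[R[i]]_n) (z0 y : 'cV[R[i]]_n) :
  0 < beta -> is_hermitian W -> 0 < sigma ->
  z0 \in @csphere R n ->
  (forall z, z \in @csphere R n -> fobj a beta z0 <= fobj a beta z) ->
  y \in @csphere R n ->
  (forall z, z \in same_mod z0 -> fsigma a beta sigma W y <= fsigma a beta sigma W z) ->
  exists2 z, z \in same_mod z0 &
    norm4 (y - z) <= (2 * sigma / beta * spec_norm W * n%:R `^ (4%:R^-1)) `^ (3%:R^-1).
Proof.
move=> bp _ sp z0s zmin ys hmin.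
have cmod0 : cmod (0 : R[i]) = 0 by exact: Normc.normc0.
pose z : 'cV[R[i]]_n := \col_k (if y k ord0 == 0 then (cmod (z0 k ord0))%:C%C
   else ((cmod (z0 k ord0)) / cmod (y k ord0))%:C%C * y k ord0).
have zmod : forall k, cmod (z k ord0) = cmod (z0 k ord0).
  move=> k; rewrite /z mxE; case: eqP => [_|/eqP yk].
    by rewrite cmodR ger0_norm // cmod_ge0.
  have cy : cmod (y k ord0) != 0 by rewrite cmod_eq0.
  by rewrite cmodM cmodR ger0_norm ?divr_ge0 ?cmod_ge0 // divfK.
have zin : z \in same_mod z0 by rewrite in_setE.
exists z => //.
set p := fun k => cmod (y k ord0) ^+ 2.
set q := fun k => cmod (z0 k ord0) ^+ 2.
have dk : forall k, cmod ((y - z) k ord0) ^+ 4 <= (p k - q k) ^+ 2.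
  move=> k.
  have -> : cmod ((y - z) k ord0) = `|cmod (y k ord0) - cmod (z0 k ord0)|.
    rewrite !mxE; case: eqP => [->|/eqP yk].
      by rewrite sub0r cmodN cmodR cmod0 sub0r normrN.
    have cy : cmod (y k ord0) != 0 by rewrite cmod_eq0.
    set r := cmod (z0 k ord0) / cmod (y k ord0).
    have -> : y k ord0 - r%:C%C * y k ord0 = (1 - r)%:C%C * y k ord0.
      by rewrite rmorphB /= rmorph1 mulrBl mul1r.
    rewrite cmodM cmodR -{1}(ger0_norm (cmod_ge0 (y k ord0))) -normrM.
    by rewrite mulrBl mul1r /r divfK.
  rewrite /p /q.
  have := cmod_ge0 (y k ord0); have := cmod_ge0 (z0 k ord0).
  move: (cmod (y k ord0)) (cmod (z0 k ord0)) => u v v0 u0.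
  have -> : `|u - v| ^+ 4 = (u - v) ^+ 2 * (u - v) ^+ 2.
    by rewrite -[4%N]/(2 + 2)%N exprD real_normK // realB ?ger0_real.
  have -> : (u ^+ 2 - v ^+ 2) ^+ 2 = (u - v) ^+ 2 * (u + v) ^+ 2 by ring.
  apply: ler_wpM2l; first exact: sqr_ge0.
  nra.
set S4 := \sum_k cmod ((y - z) k ord0) ^+ 4.
have S40 : 0 <= S4 by apply: sumr_ge0 => k _; rewrite exprn_ge0 // cmod_ge0.
set M := norm4 (y - z).
have M0 : 0 <= M by apply: powR_ge0.
have M4 : M ^+ 4 = S4 by apply: pow_root.
have h1 : beta / 2 * S4 <= fobj a beta y - fobj a beta z0.
  apply: le_trans _ (@opt_ineq _ _ _ _ _ _ bp z0s zmin ys).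
  by apply: ler_wpM2l; [rewrite divr_ge0 // ltW | apply: ler_sum => k _; apply: dk].
have fz : fobj a beta z = fobj a beta z0.
  rewrite !fobj_gf; congr gf; apply/funext => k; by rewrite zmod.
have ny : norm2 y = 1 by move: ys; rewrite in_setE.
have nz : norm2 z = 1.
  have : z \in @csphere R n.
    rewrite sphereP; under eq_bigr do rewrite zmod. by rewrite -sphereP.
  by rewrite in_setE.
have sn0 : 0 <= spec_norm W.
  have := spec_bound _ W y; rewrite ny mulr1; apply: le_trans; exact: norm2_ge0.
have h2 : fobj a beta y - fobj a beta z <= sigma / 2 * (bil W z z - bil W y y).
  have := hmin z zin; rewrite /fsigma /qform -/(bil W z z) -/(bil W y y). lra.
have h3 : bil W z z - bil W y y <= 2 * spec_norm W * norm2 (y - z).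
  have := bil_diff _ W y z.
  have b1 := bil_bound _ W (y - z) y; have b2 := bil_bound _ W z (y - z).
  have s1 := spec_bound _ W y; have s2 := spec_bound _ W (y - z).
  rewrite ny nz mulr1 in s1 b2 *.
  rewrite mul1r in b2.
  have n0 := norm2_ge0 _ (y - z).
  have t1 : norm2 (y - z) * norm2 (W *m y) <= norm2 (y - z) * spec_norm W by apply: ler_wpM2l.
  have := ler_norm (- bil W (y - z) y); rewrite normrN.
  have := ler_norm (- bil W z (y - z)); rewrite normrN.
  move=> c1 c2 e. nra.
set N := n%:R `^ (4%:R^-1).
have N0 : 0 <= N by apply: powR_ge0.
have h4 : norm2 (y - z) <= N * M by apply: norm2_le4.
have h5 : beta / 2 * M ^+ 4 <= sigma * spec_norm W * N * M.
  rewrite M4; rewrite -fz in h1.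
  have e1 : sigma / 2 * (2 * spec_norm W * norm2 (y - z)) <= sigma * spec_norm W * N * M.
    have -> : sigma / 2 * (2 * spec_norm W * norm2 (y - z)) = sigma * spec_norm W * norm2 (y - z) by field.

    by rewrite -(mulrA _ N M); apply: ler_wpM2l => //; rewrite mulr_ge0 // ltW.

  apply: le_trans h1 _; apply: le_trans h2 _; apply: le_trans _ e1.
  by apply: ler_wpM2l; [rewrite divr_ge0 // ltW|].
set K := 2 * sigma / beta * spec_norm W * N.
have [Me|Mp] := eqVneq M 0; first by rewrite Me powR_ge0.
have Mgt : 0 < M by rewrite lt_def Mp M0.
have h6 : M ^+ 3 <= K.
  have : beta / 2 * M ^+ 3 * M <= sigma * spec_norm W * N * M by rewrite -mulrA -exprSr.
  rewrite ler_pM2r // => h.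
  have -> : M ^+ 3 = 2 / beta * (beta / 2 * M ^+ 3) by field; rewrite gt_eqF.
  have -> : K = 2 / beta * (sigma * spec_norm W * N) by rewrite /K; field; rewrite gt_eqF.
  by apply: ler_wpM2l => //; rewrite divr_ge0 // ltW.
rewrite -(@pow_root' _ M 3 M0) //.
apply: ge0_ler_powR => //; rewrite ?nnegrE ?exprn_ge0 //.
  by rewrite invr_ge0 ler0n.
exact: le_trans (exprn_ge0 3 M0) h6.
Qed.
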